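(* Consider the setting and framework in the context with $\alpha_k=\frac{H+1}{H+k}$, and with policies generated by projected gradient descent-ascent: fix $\eta>0$, let $\mu_h^0(\cdot|s)$ and $\nu_h^0(\cdot|s)$ be uniform, and for $k\ge1$, $h\in[H]$, $s\in\mathcal S$, $$\mu_h^k(\cdot|s)=\mathcal P_{\Delta_{\mathcal A}}\Big(\mu_h^{k-1}(\cdot|s)+\eta\sum_b\nu_h^{k-1}(b|s)Q_h^{k-1}(s,\cdot,b)\Big),\quad \nu_h^k(\cdot|s)=\mathcal P_{\Delta_{\mathcal B}}\Big(\nu_h^{k-1}(\cdot|s)-\eta\sum_a\mu_h^{k-1}(a|s)Q_h^{k-1}(s,a,\cdot)\Big),$$ where $\mathcal P$ denotes Euclidean projection (these policies at step $h$, round $k$ are computed before $Q_h^k$). Then for all $k\ge1$ and $h\in[H]$, $$\mathrm{reg}_h^k\le\frac{2}{\eta}\cdot\frac{H+1}{H+k}+\frac{\eta\max\{A,B\}H^2}{2},$$ and, with uniform weights $\beta_k^t=1/k$, $$\overline{\mathrm{reg}}_h^k\le\frac{4}{\eta k}+\frac{\eta(A+B)H^2}{2}.$$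
   Context: Setting. A finite-horizon two-player zero-sum Markov game with finite state set $\mathcal S$, finite action sets $\mathcal A$ (max-player, $A=|\mathcal A|$) and $\mathcal B$ (min-player, $B=|\mathcal B|$), horizon $H\ge 1$, reward functions $r_h:\mathcal S\times\mathcal A\times\mathcal B\to[0,1]$ and transition kernels $\mathbb P_h(\cdot\mid s,a,b)$ on $\mathcal S$, $h\in[H]$. For $Q:\mathcal A\times\mathcal B\to\mathbb R$, $x\in\Delta_{\mathcal A}$, $y\in\Delta_{\mathcal B}$, write $\langle Q,x\times y\rangle=\sum_{a,b}x(a)y(b)Q(a,b)$. Framework. Given learning rates $\alpha_k\in(0,1]$ ($k\ge1$) with $\alpha_1=1$ and Markov policies $\mu_h^k(\cdot\mid s)\in\Delta_{\mathcal A}$, $\nu_h^k(\cdot\mid s)\in\Delta_{\mathcal B}$ ($k\ge1$, $h\in[H]$, $s\in\mathcal S$), define $Q_{H+1}^k\equiv 0$ for all $k$, $Q_h^0\equiv H-h+1$, and for $k\ge1$, $h=H,\dots,1$: $$Q_h^k(s,a,b)=(1-\alpha_k)Q_h^{k-1}(s,a,b)+\alpha_k\Big(r_h(s,a,b)+\sum_{s'}\mathbb P_h(s'\mid s,a,b)\langle Q_{h+1}^k(s',\cdot,\cdot),\mu_{h+1}^k(\cdot\mid s')\times\nu_{h+1}^k(\cdot\mid s')\rangle\Big)$$ (for $h=H$ the inner product term is $0$). Let $\alpha_k^t=\alpha_t\prod_{j=t+1}^k(1-\alpha_j)$ for $1\le t\le k$. Weighted regrets: for $h\in[H]$, $\mathrm{reg}_{h,\mu}^k(s)=\max_{z\in\Delta_{\mathcal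 A}}\sum_{t=1}^k\alpha_k^t\langle Q_h^t(s,\cdot,\cdot),z\times\nu_h^t(\cdot|s)\rangle-\sum_{t=1}^k\alpha_k^t\langle Q_h^t(s,\cdot,\cdot),\mu_h^t(\cdot|s)\times\nu_h^t(\cdot|s)\rangle$, $\mathrm{reg}_{h,\nu}^k(s)=\sum_{t=1}^k\alpha_k^t\langle Q_h^t(s,\cdot,\cdot),\mu_h^t(\cdot|s)\times\nu_h^t(\cdot|s)\rangle-\min_{z\in\Delta_{\mathcal B}}\sum_{t=1}^k\alpha_k^t\langle Q_h^t(s,\cdot,\cdot),\mu_h^t(\cdot|s)\times z\rangle$, $\mathrm{reg}_h^k=\max_{s}\max\{\mathrm{reg}_{h,\mu}^k(s),\mathrm{reg}_{h,\nu}^k(s)\}$. Given weights $\beta_k^t\ge0$ with $\sum_{t=1}^k\beta_k^t=1$, define $\overline{\mathrm{reg}}_{h,\mu}^k(s),\overline{\mathrm{reg}}_{h,\nu}^k(s)$ exactly as $\mathrm{reg}_{h,\mu}^k(s),\mathrm{reg}_{h,\nu}^k(s)$ but with $\alpha_k^t$ replaced by $\beta_k^t$, and $\overline{\mathrm{reg}}_h^k=\max_s\big(\overline{\mathrm{reg}}_{h,\mu}^k(s)+\overline{\mathrm{reg}}_{h,\nu}^k(s)\big)$. *)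

(* Defs.v *)
From HB Require Import structures.
From mathcomp Require Import all_boot all_order all_algebra.
From mathcomp Require Import reals.
Set Implicit Arguments. Unset Strict Implicit. Unset Printing Implicit Defensive.
Import Order.TTheory GRing.Theory Num.Theory.
Local Open Scope ring_scope.

Section MG.
Variables (R : realType) (S A B : finType) (H : nat).

Definition is_dist (T : finType) (x : T -> R) : Prop :=
  (forall a, 0 <= x a) /\ \sum_a x a = 1.

Definition is_proj (T : finType) (v x : T -> R) : Prop :=
  is_dist x /\
  forall z : T -> R, is_dist z ->
    \sum_a (x a - v a) ^+ 2 <= \sum_a (z a - v a) ^+ 2.

Definition ip (Q : A -> B -> R) (x : A -> R) (y : B -> R) : R :=
  \sum_a \sum_b x a * y b * Q a b.

Definition alpha (k : nat) : R := (H.+1)%:R / (H + k)%:R.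

Definition alpha_w (k t : nat) : R :=
  alpha t * \prod_(t.+1 <= j < k.+1) (1 - alpha j).

Variables (r : nat -> S -> A -> B -> R) (P : nat -> S -> A -> B -> S -> R).
(* policies: mu k h s a = mu_h^k(a|s), nu k h s b = nu_h^k(b|s) *)
Variables (mu : nat -> nat -> S -> A -> R) (nu : nat -> nat -> S -> B -> R).

(* Given Qprev = Q^{k-1}, Qaux k Qprev d is Q_h^k with h = H + 1 - d. *)
Fixpoint Qaux (k : nat) (Qprev : nat -> S -> A -> B -> R) (d : nat)
  : S -> A -> B -> R :=
  match d with
  | 0 => fun _ _ _ => 0
  | d'.+1 => fun s a b =>
      let h := (H - d')%N in
      (1 - alpha k) * Qprev h s a b +
      alpha k * (r h s a b +
        \sum_s' P h s a b s' *
          ip (Qaux k Qprev d' s') (mu k h.+1 s') (nu k h.+1 s'))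
  end.

Fixpoint Qfun (k : nat) : nat -> S -> A -> B -> R :=
  match k with
  | 0 => fun h _ _ _ => (H.+1 - h)%:R
  | k'.+1 => fun h => Qaux k'.+1 (Qfun k') (H.+1 - h)
  end.

(* Weighted regret "gaps" for a fixed comparator z; the regret is the
   maximum of these over z in the simplex. w t = weight of round t. *)
Definition gap_mu (w : nat -> R) (k h : nat) (s : S) (z : A -> R) : R :=
  \sum_(1 <= t < k.+1) w t * ip (Qfun t h s) z (nu t h s)
  - \sum_(1 <= t < k.+1) w t * ip (Qfun t h s) (mu t h s) (nu t h s).

Definition gap_nu (w : nat -> R) (k h : nat) (s : S) (z : B -> R) : R :=
  \sum_(1 <= t < k.+1) w t * ip (Qfun t h s) (mu t h s) (nu t h s)
  - \sum_(1 <= t < k.+1) w t * ip (Qfun t h s) (mu t h s) z.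

End MG.

(* Main.v *)
Require Import Defs.
From HB Require Import structures.
From mathcomp Require Import all_boot all_order all_algebra.
From mathcomp Require Import reals.
From mathcomp Require Import ring lra zify.
Import Order.TTheory GRing.Theory Num.Theory.
Local Open Scope ring_scope.

Lemma proj_vi (R : realType) (T : finType) (y x z : T -> R) :
  is_proj y x -> is_dist z -> 0 <= \sum_i (x i - y i) * (z i - x i).
Proof.
move=> [[x0 x1] xmin] [z0 z1].
set a := \sum_i _. set b := \sum_i (z i - x i) ^+ 2.
have b0 : 0 <= b by apply: sumr_ge0 => i _; apply: sqr_ge0.
have key : forall l : R, 0 < l -> l <= 1 -> 0 <= 2 * l * a + l ^+ 2 * b.
  move=> l l0 l1.
  have := xmin (fun i => x i + l * (z i - x i)) _.
  have -> : \sum_i (x i + l * (z i - x i) - y i) ^+ 2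
      = \sum_i (x i - y i) ^+ 2 + (2 * l * a + l ^+ 2 * b).
    rewrite /a /b !mulr_sumr -!big_split /=; apply: eq_bigr => i _; ring.
  rewrite lerDl; apply.
  split.
    move=> i; have : 0 <= (1 - l) * x i + l * z i.
      apply: addr_ge0; apply: mulr_ge0 => //; [by rewrite subr_ge0 | exact: ltW].
    by have -> : (1 - l) * x i + l * z i = x i + l * (z i - x i) by ring.
  by rewrite big_split /= -mulr_sumr sumrB x1 z1 subrr mulr0 addr0.
rewrite leNgt; apply/negP => an.
set l := - a / (b - a).
have ba : 0 < b - a by lra.
have bne : b - a != 0 by rewrite gt_eqF.
have E : l * (b - a) = - a by rewrite /l divfK.
have l0 : 0 < l by rewrite /l divr_gt0 // oppr_gt0.
have l1 : l <= 1 by rewrite /l ler_pdivrMr // mul1r; lra.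
have := key l l0 l1.
have -> : 2 * l * a + l ^+ 2 * b = l * a * (1 + l).
  have Eb : l * b = - a + l * a by rewrite -E; ring.
  have -> : l ^+ 2 * b = l * (l * b) by rewrite expr2 mulrA.
  rewrite Eb; ring.
rewrite leNgt => /negP; apply.
rewrite pmulr_llt0; last by lra.
by rewrite pmulr_rlt0.
Qed.

Lemma one_step (R : realType) (T : finType) (y x x' g z : T -> R) (eta : R) :
  0 < eta -> is_proj y x' -> (forall i, y i = x i + eta * g i) -> is_dist z ->
  \sum_i g i * (z i - x i) <=
  (\sum_i (x i - z i) ^+ 2 - \sum_i (x' i - z i) ^+ 2) / (2 * eta)
  + eta / 2 * \sum_i g i ^+ 2.
Proof.
move=> e0 hp hy hz.
have vi := @proj_vi _ _ _ _ _ hp hz.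
have q0 : 0 <= \sum_i (y i - x' i) ^+ 2 by apply: sumr_ge0 => i _; apply: sqr_ge0.
have E1 : \sum_i (y i - z i) ^+ 2 = \sum_i (y i - x' i) ^+ 2
   + \sum_i (x' i - z i) ^+ 2 + 2 * \sum_i (x' i - y i) * (z i - x' i).
  rewrite mulr_sumr -!big_split /=; apply: eq_bigr => i _; ring.
have E2 : \sum_i (y i - z i) ^+ 2 = \sum_i (x i - z i) ^+ 2
   + 2 * eta * \sum_i g i * (x i - z i) + eta ^+ 2 * \sum_i g i ^+ 2.
  rewrite !mulr_sumr -!big_split /=; apply: eq_bigr => i _; rewrite hy; ring.
have E3 : \sum_i g i * (x i - z i) = - \sum_i g i * (z i - x i).
  rewrite -sumrN; apply: eq_bigr => i _; ring.
rewrite E3 in E2.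
set G := \sum_i g i * (z i - x i) in E2 *.
set D := \sum_i (x i - z i) ^+ 2 in E2 *.
set D' := \sum_i (x' i - z i) ^+ 2 in E1 *.
set Q := \sum_i g i ^+ 2 in E2 *.
have key : 2 * eta * G <= D - D' + eta ^+ 2 * Q by lra.
have e2 : 0 < 2 * eta by lra.
rewrite -(ler_pM2l e2).
have -> : 2 * eta * ((D - D') / (2 * eta) + eta / 2 * Q) = D - D' + eta ^+ 2 * Q.
  by field; rewrite gt_eqF.
exact: key.
Qed.

Lemma dist_diam (R : realType) (T : finType) (x z : T -> R) :
  is_dist x -> is_dist z -> \sum_i (x i - z i) ^+ 2 <= 2.
Proof.
have sq : forall (v : T -> R), is_dist v -> \sum_i v i ^+ 2 <= 1.
  move=> v [v0 v1]; rewrite -v1; apply: ler_sum => i _.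
  have vi1 : v i <= 1.
    by rewrite -v1 (bigD1 i) //= lerDl; apply: sumr_ge0 => j _.
  by rewrite expr2 ler_piMr.
move=> hx hz.
have := sq _ hx; have := sq _ hz.
have p0 : 0 <= \sum_i x i * z i.
  by apply: sumr_ge0 => i _; apply: mulr_ge0; [case: hx | case: hz].
have -> : \sum_i (x i - z i) ^+ 2 = \sum_i x i ^+ 2 + \sum_i z i ^+ 2 - 2 * \sum_i x i * z i.
  rewrite mulr_sumr -big_split -sumrB /=; apply: eq_bigr => i _; ring.
lra.
Qed.

Lemma telesc (R : realType) (w D : nat -> R) (K : nat) :
 (forall t, (1 <= t <= K)%N -> 0 <= w t) ->
 (forall t, (1 <= t < K)%N -> w t <= w t.+1) ->
 (forall t, (1 <= t <= K)%N -> D t <= 2) ->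
 (forall t, 0 <= D t) ->
 forall n, (n.+1 <= K)%N ->
   \sum_(1 <= t < n.+2) w t * (D t - D t.+1) <= w n.+1 * (2 - D n.+2).
Proof.
move=> w0 wm D2 D0; elim=> [|n IH] hn.
  rewrite big_nat1; apply: ler_wpM2l; first by apply: w0; rewrite hn.
  have := D2 1%N; rewrite hn => /(_ isT); lra.
rewrite big_nat_recr //=.
have IH' := IH (ltnW hn).
have w1 : w n.+1 <= w n.+2 by apply: wm; rewrite hn.
have d2 : D n.+2 <= 2 by apply: D2; rewrite ltnW.
have wp : 0 <= w n.+1 by apply: w0; lia.
have : w n.+1 * (2 - D n.+2) <= w n.+2 * (2 - D n.+2).
  by nra.
nra.
Qed.

Lemma ogd (R : realType) (T : finType) (x y g : nat -> T -> R) (w : nat -> R)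
  (eta G : R) (k : nat) (z : T -> R) :
 0 < eta -> (1 <= k)%N -> is_dist z ->
 (forall t, (1 <= t <= k)%N -> is_dist (x t)) ->
 (forall t, (1 <= t <= k)%N -> is_proj (y t) (x t.+1)) ->
 (forall t i, (1 <= t <= k)%N -> y t i = x t i + eta * g t i) ->
 (forall t, (1 <= t <= k)%N -> \sum_i g t i ^+ 2 <= G) ->
 (forall t, (1 <= t <= k)%N -> 0 <= w t) ->
 (forall t, (1 <= t < k)%N -> w t <= w t.+1) ->
 \sum_(1 <= t < k.+1) w t = 1 ->
 \sum_(1 <= t < k.+1) w t * \sum_i g t i * (z i - x t i) <= w k / eta + eta * G / 2.
Proof.
move=> e0 k1 hz hx hp hy hG w0 wm ws.
set D := fun t => \sum_i (x t i - z i) ^+ 2.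
set Q := fun t => \sum_i g t i ^+ 2.
apply: (@le_trans _ _ (\sum_(1 <= t < k.+1)
   w t * ((D t - D t.+1) / (2 * eta) + eta / 2 * Q t))).
  apply: ler_sum_nat => t ht; apply: ler_wpM2l; first exact: w0.
  exact: (@one_step _ _ _ _ _ _ _ _ e0 (hp t ht) (hy t^~ ht) hz).
have -> : \sum_(1 <= t < k.+1) w t * ((D t - D t.+1) / (2 * eta) + eta / 2 * Q t)
   = (\sum_(1 <= t < k.+1) w t * (D t - D t.+1)) / (2 * eta)
     + eta / 2 * \sum_(1 <= t < k.+1) w t * Q t.
  rewrite mulr_suml mulr_sumr -big_split /=; apply: eq_bigr => t _; ring.
have T1 : \sum_(1 <= t < k.+1) w t * (D t - D t.+1) <= 2 * w k.
  case: k k1 hz hx hp hy hG w0 wm ws => // n _ hz hx hp hy hG w0 wm ws.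
  apply: le_trans (@telesc _ w D n.+1 w0 wm _ _ n (leqnn _)) _.
  - by move=> t ht; apply: dist_diam; [apply: hx | ].
  - by move=> t; apply: sumr_ge0 => i _; apply: sqr_ge0.
  - have : 0 <= D n.+2 by apply: sumr_ge0 => i _; apply: sqr_ge0.
    have : 0 <= w n.+1 by apply: w0; rewrite leqnn.
    nra.
have T2 : \sum_(1 <= t < k.+1) w t * Q t <= G.
  rewrite -[G]mul1r -ws mulr_suml; apply: ler_sum_nat => t ht.
  by apply: ler_wpM2l; [apply: w0 | apply: hG].
have e2 : 0 < 2 * eta by lra.
have : (\sum_(1 <= t < k.+1) w t * (D t - D t.+1)) / (2 * eta) <= w k / eta.
  rewrite ler_pdivrMr //; have -> : w k / eta * (2 * eta) = 2 * w k by field; rewrite gt_eqF.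
  exact: T1.
have : eta / 2 * \sum_(1 <= t < k.+1) w t * Q t <= eta * G / 2.
  rewrite (_ : eta * G / 2 = eta / 2 * G); last by ring.
  by apply: ler_wpM2l; first lra.
lra.
Qed.

Lemma alpha_ge0 (R : realType) H t : 0 <= alpha R H t.
Proof. by rewrite /alpha divr_ge0. Qed.

Lemma alpha_le1 (R : realType) H t : (1 <= t)%N -> alpha R H t <= 1.
Proof.
move=> t1; rewrite /alpha ler_pdivrMr ?mul1r ?ler_nat; [lia|].
by rewrite ltr0n; lia.
Qed.

Lemma alpha_w_ge0 (R : realType) H k t : (1 <= t)%N -> 0 <= alpha_w R H k t.
Proof.
move=> t1; rewrite /alpha_w; apply: mulr_ge0; first exact: alpha_ge0.
rewrite big_nat_cond; apply: prodr_ge0 => j /andP[/andP[hj _] _].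
rewrite subr_ge0 alpha_le1 //; lia.
Qed.

Lemma alpha_w_kk (R : realType) H k : alpha_w R H k k = alpha R H k.
Proof. by rewrite /alpha_w big_geq // mulr1. Qed.

Lemma alpha_w_mono (R : realType) H k t : (1 <= t < k)%N ->
  alpha_w R H k t <= alpha_w R H k t.+1.
Proof.
move=> /andP[t1 tk]; rewrite /alpha_w big_ltn ?ltnS // mulrA.
apply: ler_wpM2r.
  rewrite big_nat_cond; apply: prodr_ge0 => j /andP[/andP[hj _] _].
  rewrite subr_ge0 alpha_le1 //; lia.
rewrite /alpha.
have -> : (H + t.+1)%:R = (H + t)%:R + 1 :> R by rewrite addnS -addn1 natrD.
have a0 : 0 < (H + t)%:R :> R by rewrite ltr0n; lia.
set a := (H + t)%:R : R.
have c1 : 1 <= (H.+1)%:R :> R by rewrite ler1n.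
set c := (H.+1)%:R : R.
have -> : c / a * (1 - c / (a + 1)) = c / (a + 1) * ((a + 1 - c) / a).
  by field; apply/andP; split; rewrite gt_eqF //; lra.
rewrite ler_piMr //.
  rewrite divr_ge0 //; lra.
rewrite ler_pdivrMr // mul1r; lra.
Qed.

Lemma alpha_w_sum (R : realType) H k : (1 <= k)%N ->
  \sum_(1 <= t < k.+1) alpha_w R H k t = 1.
Proof.
case: k => // k _; elim: k => [|k IH].
  rewrite big_nat1 alpha_w_kk /alpha addn1 divff // pnatr_eq0; lia.
rewrite big_nat_recr //= alpha_w_kk.
have -> : \sum_(1 <= t < k.+2) alpha_w R H k.+2 t
   = \sum_(1 <= t < k.+2) alpha_w R H k.+1 t * (1 - alpha R H k.+2).
  apply: eq_big_nat => t ht; rewrite /alpha_w big_nat_recr /=; last by lia.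
  by rewrite mulrA.
by rewrite -mulr_suml IH; ring.
Qed.

Lemma lin_bound (R : realType) (T : finType) (y f : T -> R) (c : R) :
  is_dist y -> (forall b, 0 <= f b <= c) ->
  0 <= \sum_b y b * f b <= c.
Proof.
move=> [y0 y1] hf; apply/andP; split.
  by apply: sumr_ge0 => b _; apply: mulr_ge0 => //; case/andP: (hf b).
apply: (@le_trans _ _ (\sum_b y b * c)).
  by apply: ler_sum => b _; apply: ler_wpM2l => //; case/andP: (hf b).
by rewrite -mulr_suml y1 mul1r.
Qed.

Lemma ip_lin (R : realType) (A B : finType) (Q : A -> B -> R) x y :
  ip Q x y = \sum_a x a * \sum_b y b * Q a b.
Proof.
by rewrite /ip; apply: eq_bigr => a _; rewrite mulr_sumr; apply: eq_bigr => b _; rewrite mulrA.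
Qed.

Lemma ip_lin2 (R : realType) (A B : finType) (Q : A -> B -> R) x y :
  ip Q x y = \sum_b y b * \sum_a x a * Q a b.
Proof.
rewrite /ip exchange_big; apply: eq_bigr => b _; rewrite mulr_sumr; apply: eq_bigr => a _.
ring.
Qed.

Lemma ip_bound (R : realType) (A B : finType) (Q : A -> B -> R) x y c :
  is_dist x -> is_dist y -> (forall a b, 0 <= Q a b <= c) -> 0 <= ip Q x y <= c.
Proof.
move=> hx hy hQ; rewrite ip_lin; apply: lin_bound => // a.
exact: lin_bound.
Qed.

Lemma sq_bound (R : realType) (T : finType) (g : T -> R) c :
  (forall a, 0 <= g a <= c) -> \sum_a g a ^+ 2 <= #|T|%:R * c ^+ 2.
Proof.
move=> hg; apply: (@le_trans _ _ (\sum_(a : T) c ^+ 2)).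
  apply: ler_sum => a _; have /andP[g0 gc] := hg a.
  by rewrite ler_sqr // ?nnegrE //; lra.
by rewrite sumr_const mulr_natl.
Qed.

Lemma Qbound (R : realType) (S A B : finType) (H : nat)
  (r : nat -> S -> A -> B -> R) (P : nat -> S -> A -> B -> S -> R)
  (mu : nat -> nat -> S -> A -> R) (nu : nat -> nat -> S -> B -> R) :
  (forall h s a b, (1 <= h <= H)%N -> 0 <= r h s a b <= 1) ->
  (forall h s a b, (1 <= h <= H)%N ->
     (forall s', 0 <= P h s a b s') /\ \sum_s' P h s a b s' = 1) ->
  (forall k h s, (1 <= k)%N -> (1 <= h <= H)%N -> is_dist (mu k h s)) ->
  (forall k h s, (1 <= k)%N -> (1 <= h <= H)%N -> is_dist (nu k h s)) ->
  forall k h s a b, (1 <= h <= H)%N ->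
    0 <= Qfun H r P mu nu k h s a b <= (H.+1 - h)%:R.
Proof.
move=> hr hP hmu hnu; elim=> [|k IH] h s a b hh.
  by rewrite /= lexx ler0n.
have aux : forall d, (d <= H)%N -> forall s a b,
    0 <= Qaux H r P mu nu k.+1 (Qfun H r P mu nu k) d s a b <= d%:R.
  elim=> [|d IHd] hd s' a' b' /=; first by rewrite lexx.
  have hh' : (1 <= H - d <= H)%N by lia.
  have q := IH (H - d)%N s' a' b' hh'.
  rewrite (_ : (H.+1 - (H - d))%N = d.+1) in q; last by lia.
  have rr := hr (H - d)%N s' a' b' hh'.
  have [P0 P1] := hP (H - d)%N s' a' b' hh'.
  have ipb : forall s'', 0 <= ip (Qaux H r P mu nu k.+1 (Qfun H r P mu nu k) d s'')
      (mu k.+1 (H - d)%N.+1 s'') (nu k.+1 (H - d)%N.+1 s'') <= d%:R.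
    move=> s''; case: d IHd hd {q rr P0 P1 hh'} => [|d] IHd hd.
      rewrite /= /ip big1 ?lexx // => i _; rewrite big1 // => j _; by rewrite mulr0.
    apply: ip_bound; [apply: hmu | apply: hnu | ] => //; first by lia.
      by lia.
    by move=> i j; apply: IHd; lia.
  have pb : 0 <= \sum_s'' P (H - d)%N s' a' b' s'' *
      ip (Qaux H r P mu nu k.+1 (Qfun H r P mu nu k) d s'')
      (mu k.+1 (H - d)%N.+1 s'') (nu k.+1 (H - d)%N.+1 s'') <= d%:R.
    by apply: lin_bound.
  have a0 := alpha_ge0 R H k.+1.
  have a1 : alpha R H k.+1 <= 1 by apply: alpha_le1.
  move: q rr pb a0 a1; rewrite -addn1 natrD.
  set p := \sum_s'' _.
  set al := alpha R H k.+1.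
  set Q0 := Qfun H r P mu nu k (H - d)%N s' a' b'.
  move=> /andP[q0 q1] /andP[r0 r1] /andP[p0 p1] a0 a1.
  apply/andP; split; nra.
rewrite /=; apply: aux; lia.
Qed.

Lemma help (R : realType) (x y e c : R) : 0 < e -> 0 <= c -> x <= y ->
  e * (x * c) / 2 <= e * y * c / 2.
Proof.
move=> e0 c0 xy.
rewrite (_ : e * (x * c) / 2 = (e * c / 2) * x); last by ring.
rewrite (_ : e * y * c / 2 = (e * c / 2) * y); last by ring.
by apply: ler_wpM2l => //; apply: divr_ge0 => //; apply: mulr_ge0 => //; apply: ltW.
Qed.

Theorem mainTheorem10 (R : realType) (S A B : finType) (H : nat)
  (r : nat -> S -> A -> B -> R) (P : nat -> S -> A -> B -> S -> R)
  (eta : R) (mu : nat -> nat -> S -> A -> R) (nu : nat -> nat -> S -> B -> R) :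
  (1 <= H)%N ->
  (forall h s a b, (1 <= h <= H)%N -> 0 <= r h s a b <= 1) ->
  (forall h s a b, (1 <= h <= H)%N ->
     (forall s', 0 <= P h s a b s') /\ \sum_s' P h s a b s' = 1) ->
  0 < eta ->
  (forall h s a, (1 <= h <= H)%N -> mu 0%N h s a = 1 / #|A|%:R) ->
  (forall h s b, (1 <= h <= H)%N -> nu 0%N h s b = 1 / #|B|%:R) ->
  (forall k h s, (1 <= k)%N -> (1 <= h <= H)%N ->
     is_proj
       (fun a => mu k.-1 h s a +
          eta * \sum_b nu k.-1 h s b * Qfun H r P mu nu k.-1 h s a b)
       (mu k h s)) ->
  (forall k h s, (1 <= k)%N -> (1 <= h <= H)%N ->
     is_proj
       (fun b => nu k.-1 h s b -
          eta * \sum_a mu k.-1 h s a * Qfun H r P mu nu k.-1 h s a b)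
       (nu k h s)) ->
  forall k h, (1 <= k)%N -> (1 <= h <= H)%N ->
    (forall s,
      (forall z : A -> R, is_dist z ->
         gap_mu H r P mu nu (alpha_w R H k) k h s z
         <= 2 / eta * ((H.+1)%:R / (H + k)%:R)
            + eta * (maxn #|A| #|B|)%:R * (H ^ 2)%:R / 2) /\
      (forall z : B -> R, is_dist z ->
         gap_nu H r P mu nu (alpha_w R H k) k h s z
         <= 2 / eta * ((H.+1)%:R / (H + k)%:R)
            + eta * (maxn #|A| #|B|)%:R * (H ^ 2)%:R / 2)) /\
    (forall s (z1 : A -> R) (z2 : B -> R), is_dist z1 -> is_dist z2 ->
       gap_mu H r P mu nu (fun _ => 1 / k%:R) k h s z1
       + gap_nu H r P mu nu (fun _ => 1 / k%:R) k h s z2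
       <= 4 / (eta * k%:R) + eta * (#|A| + #|B|)%:R * (H ^ 2)%:R / 2).
Proof.
move=> H1 hr hP e0 _ _ hmu hnu k h k1 hh.
have dmu : forall k h s, (1 <= k)%N -> (1 <= h <= H)%N -> is_dist (mu k h s).
  by move=> k' h' s' k1' hh'; case: (hmu k' h' s' k1' hh').
have dnu : forall k h s, (1 <= k)%N -> (1 <= h <= H)%N -> is_dist (nu k h s).
  by move=> k' h' s' k1' hh'; case: (hnu k' h' s' k1' hh').
have QB : forall t s a b, 0 <= Qfun H r P mu nu t h s a b <= H%:R.
  move=> t s a b; have /andP[q0 q1] := @Qbound R S A B H r P mu nu hr hP dmu dnu t h s a b hh.
  rewrite q0 /=; apply: le_trans q1 _; rewrite ler_nat; lia.
set Q := Qfun H r P mu nu.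
have Gmu : forall (w : nat -> R) s (z : A -> R),
    (forall t, (1 <= t <= k)%N -> 0 <= w t) ->
    (forall t, (1 <= t < k)%N -> w t <= w t.+1) ->
    \sum_(1 <= t < k.+1) w t = 1 -> is_dist z ->
    gap_mu H r P mu nu w k h s z <= w k / eta + eta * (#|A|%:R * H%:R ^+ 2) / 2.
  move=> w s z w0 wm ws hz.
  have -> : gap_mu H r P mu nu w k h s z = \sum_(1 <= t < k.+1) w t *
      \sum_a (\sum_b nu t h s b * Q t h s a b) * (z a - mu t h s a).
    rewrite /gap_mu -sumrB; apply: eq_bigr => t _; rewrite !ip_lin -mulrBr -sumrB.
    by congr (_ * _); apply: eq_bigr => a _; rewrite /Q; ring.
  apply: (@ogd R A (fun t => mu t h s)
     (fun t a => mu t h s a + eta * \sum_b nu t h s b * Q t h s a b)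
     (fun t a => \sum_b nu t h s b * Q t h s a b)) => //.
  - by move=> t /andP[t1 _]; apply: dmu.
  - by move=> t /andP[t1 _]; exact: (hmu t.+1 h s isT hh).
  - move=> t /andP[t1 _]; apply: sq_bound => a; apply: lin_bound => //.
    exact: dnu.
have Gnu : forall (w : nat -> R) s (z : B -> R),
    (forall t, (1 <= t <= k)%N -> 0 <= w t) ->
    (forall t, (1 <= t < k)%N -> w t <= w t.+1) ->
    \sum_(1 <= t < k.+1) w t = 1 -> is_dist z ->
    gap_nu H r P mu nu w k h s z <= w k / eta + eta * (#|B|%:R * H%:R ^+ 2) / 2.
  move=> w s z w0 wm ws hz.
  have -> : gap_nu H r P mu nu w k h s z = \sum_(1 <= t < k.+1) w t *
      \sum_b (- \sum_a mu t h s a * Q t h s a b) * (z b - nu t h s b).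
    rewrite /gap_nu -sumrB; apply: eq_bigr => t _; rewrite !ip_lin2 -mulrBr -sumrB.
    by congr (_ * _); apply: eq_bigr => a _; rewrite /Q; ring.
  apply: (@ogd R B (fun t => nu t h s)
     (fun t b => nu t h s b - eta * \sum_a mu t h s a * Q t h s a b)
     (fun t b => - \sum_a mu t h s a * Q t h s a b)) => //.
  - by move=> t /andP[t1 _]; apply: dnu.
  - by move=> t /andP[t1 _]; exact: (hnu t.+1 h s isT hh).
  - by move=> t i _; rewrite mulrN.
  - move=> t /andP[t1 _].
    rewrite (eq_bigr (fun b => (\sum_a mu t h s a * Q t h s a b) ^+ 2)); last first.
      by move=> b _; rewrite sqrrN.
    apply: sq_bound => b; apply: lin_bound => //; exact: dmu.
have Hn : 0 <= H%:R ^+ 2 :> R by apply: sqr_ge0.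
rewrite natrX; split.
  have al0 := alpha_ge0 R H k.
  have aw := alpha_w_kk R H k.
  have hw0 : forall t, (1 <= t <= k)%N -> 0 <= alpha_w R H k t.
    by move=> t /andP[t1 _]; apply: alpha_w_ge0.
  have hwm : forall t, (1 <= t < k)%N -> alpha_w R H k t <= alpha_w R H k t.+1.
    by move=> t ht; apply: alpha_w_mono.
  have hws := @alpha_w_sum R H k k1.
  have mA : #|A|%:R <= (maxn #|A| #|B|)%:R :> R by rewrite ler_nat leq_maxl.
  have mB : #|B|%:R <= (maxn #|A| #|B|)%:R :> R by rewrite ler_nat leq_maxr.
  have ae : alpha R H k / eta <= 2 / eta * ((H.+1)%:R / (H + k)%:R).
    rewrite -/(alpha R H k) (_ : 2 / eta * alpha R H k = 2 * (alpha R H k / eta)); last by ring.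
    have : 0 <= alpha R H k / eta by rewrite divr_ge0 // ltW.
    lra.
  move=> s; split=> z hz.
    apply: le_trans (Gmu _ s z hw0 hwm hws hz) _; rewrite aw.
    by apply: lerD => //; apply: help.
  apply: le_trans (Gnu _ s z hw0 hwm hws hz) _; rewrite aw.
  by apply: lerD => //; apply: help.
have kp : 0 < k%:R :> R by rewrite ltr0n.
have hw0 : forall t, (1 <= t <= k)%N -> 0 <= (fun _ => 1 / k%:R : R) t.
  by move=> t _ /=; rewrite divr_ge0.
have hwm : forall t, (1 <= t < k)%N -> (fun _ => 1 / k%:R : R) t <= (fun _ => 1 / k%:R : R) t.+1.
  by [].
have hws : \sum_(1 <= t < k.+1) (fun _ => 1 / k%:R : R) t = 1.
  rewrite sumr_const_nat (_ : (k.+1 - 1)%N = k); last by lia.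
  by rewrite -[LHS]mulr_natr mul1r mulVf // gt_eqF.
move=> s z1 z2 hz1 hz2.
have := Gmu _ s z1 hw0 hwm hws hz1.
have := Gnu _ s z2 hw0 hwm hws hz2.
rewrite natrD.
have -> : 1 / k%:R / eta = 1 / (eta * k%:R) by field; rewrite !gt_eqF.
have -> : 4 / (eta * k%:R) = 4 * (1 / (eta * k%:R)) by ring.
have : 0 <= 1 / (eta * k%:R) by rewrite divr_ge0 // mulr_ge0 // ltW.
set u := 1 / (eta * k%:R).
set a := #|A|%:R; set b := #|B|%:R; set c := H%:R ^+ 2.
move=> u0 h2 h1.
have -> : eta * (a + b) * c / 2 = eta * (a * c) / 2 + eta * (b * c) / 2 by ring.
lra.
Qed.
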